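(* Let $f,g\in\mathbb L^2([0,1])$ with $\Delta=\|f-g\|>0$, and let $X$ be distributed according to the model below. Then for all $\epsilon<1/4$, \[ \mathbb P\Big(\big|\eta(X)-\tfrac12\big|\le\epsilon\Big)\ge(2\pi)^{-1/2}\Big[\frac\epsilon\Delta e^{-(1+\Delta/2)^2/2}\wedge\frac{e^{-1/2}}2\Big]. \]
   Context: Model: $Y\sim\mathrm{Bernoulli}(1/2)$ independent of a standard Brownian motion $W$ on $[0,1]$, and $dX(t)=Yf(t)\,dt+(1-Y)g(t)\,dt+dW(t)$. Regression function $\eta(X)=\mathbb P(Y=1\mid X)=\dfrac{\exp(\int_0^1(f-g)\,dX-\frac12\|f\|^2+\frac12\|g\|^2)}{1+\exp(\int_0^1(f-g)\,dX-\frac12\|f\|^2+\frac12\|g\|^2)}$. $\|\cdot\|$ is the $\mathbb L^2([0,1])$ norm; $a\wedge b=\min\{a,b\}$. *)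

(* Defs.v *)
From HB Require Import structures.
From mathcomp Require Import all_boot all_order all_algebra.
From mathcomp Require Import all_classical all_reals all_analysis.
Set Implicit Arguments. Unset Strict Implicit. Unset Printing Implicit Defensive.
Import Order.TTheory GRing.Theory Num.Theory.
Local Open Scope classical_set_scope.
Local Open Scope ring_scope.

Section defs.
Variable R : realType.

Definition L2_01 (h : R -> R) : Prop :=
  measurable_fun `[(0:R), (1:R)] h /\
  (lebesgue_measure).-integrable `[(0:R), (1:R)] (fun t => ((h t) ^+ 2)%:E).

Definition ip01 (h k : R -> R) : R :=
  Rintegral lebesgue_measure `[(0:R), (1:R)] (fun t => h t * k t).
Definition norm01 (h : R -> R) : R := Num.sqrt (ip01 h h).

Variables (d : measure_display) (T : measurableType d) (P : probability T R).

Definition centered_gaussian (Z : T -> R) (s : R) : Prop :=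
  measurable_fun setT Z /\
  forall B : set R, measurable B ->
    P (Z @^-1` B) = (if s == 0 then \d_(0:R) B else normal_prob (0:R) s B).

Definition indep_rv (X Z : T -> R) : Prop :=
  forall A B : set R, measurable A -> measurable B ->
    P (X @^-1` A `&` Z @^-1` B) = (P (X @^-1` A) * P (Z @^-1` B))%E.

(* Wiener integral of a standard Brownian motion on [0,1]:
   W h = \int_0^1 h dW, i.e. an isonormal Gaussian process on L^2([0,1]). *)
Definition wiener_integral (W : (R -> R) -> T -> R) : Prop :=
  (forall h, L2_01 h -> centered_gaussian (W h) (norm01 h)) /\
  (forall h k (a b : R), L2_01 h -> L2_01 k ->
     {ae P, forall w, W (fun t => a * h t + b * k t) w = a * W h w + b * W k w}).

Definition bernoulli_half (Y : T -> R) : Prop :=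
  measurable_fun setT Y /\ (forall w, Y w = 0 \/ Y w = 1) /\
  P (Y @^-1` [set 1%R]) = (2^-1)%:E.

(* \int_0^1 h dX for dX = (Y f + (1-Y) g) dt + dW *)
Definition int_dX (f g : R -> R) (Y : T -> R) (W : (R -> R) -> T -> R)
  (h : R -> R) (w : T) : R :=
  Y w * ip01 h f + (1 - Y w) * ip01 h g + W h w.

Definition eta_reg (f g : R -> R) (Y : T -> R) (W : (R -> R) -> T -> R) (w : T) : R :=
  let S := int_dX f g Y W (fun t => f t - g t) w
           - 2^-1 * norm01 f ^+ 2 + 2^-1 * norm01 g ^+ 2 in
  expR S / (1 + expR S).

End defs.

(* Main.v *)
Require Import Defs.
From HB Require Import structures.
From mathcomp Require Import all_boot all_order all_algebra.
From mathcomp Require Import all_classical all_reals all_analysis.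
From mathcomp Require Import ring lra measurable_realfun.
Import Order.TTheory GRing.Theory Num.Theory numFieldNormedType.Exports.
Local Open Scope classical_set_scope.
Local Open Scope ring_scope.

Section H.
Local Set Implicit Arguments.
Variable R : realType.
Notation mu := (@lebesgue_measure R).
Lemma mI0 : measurable (`[(0:R), (1:R)] : set R). Proof. exact: measurable_itv. Qed.
Lemma mI : @measurable _ (measurableTypeR R) (`[(0:R), (1:R)] : set R). Proof. exact: mI0. Qed.

Lemma L2_mul (f g : R -> R) : L2_01 f -> L2_01 g ->
  mu.-integrable `[(0:R), (1:R)] (EFin \o (fun t => f t * g t)).
Proof.
move=> [mf If] [mg Ig].
have := integrableD mI If Ig.
apply: (@le_integrable _ _ _ mu); first exact: mI.
- by apply/measurable_EFinP; apply: measurable_funM.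
- move=> t _ /=; rewrite lee_fin.
  rewrite (@ger0_norm _ ((f t)^+2 + (g t)^+2)); last by nra.
  rewrite ler_norml; apply/andP; split; nra.
Qed.

Lemma L2_sub (f g : R -> R) : L2_01 f -> L2_01 g -> L2_01 (fun t => f t - g t).
Proof.
move=> [mf If] [mg Ig]; split; first exact: measurable_funB.
have I2f := integrableZl mI 2 If.
have I2g := integrableZl mI 2 Ig.
have := integrableD mI I2f I2g.
apply: (@le_integrable _ _ _ mu); first exact: mI.
- by apply/measurable_EFinP; apply: measurable_funX; apply: measurable_funB.
- move=> t _ /=; rewrite lee_fin.
  rewrite (@ger0_norm _ (2 * (f t)^+2 + 2 * (g t)^+2)); last by nra.
  rewrite ger0_norm ?sqr_ge0 //.
  have := sqr_ge0 (f t + g t); rewrite !expr2; nra.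
Qed.

Lemma logistic_cont : continuous (fun x : R => expR x / (1 + expR x)).
Proof.
move=> x; apply: cvgM; first exact: continuous_expR.
apply: cvgV; first by rewrite gt_eqF // ltr_pwDl // expR_gt0.
apply: cvgD; [exact: cvg_cst | exact: continuous_expR].
Qed.

Lemma logistic_bound (s e : R) : 0 <= e -> e < 4^-1 -> `|s| <= e ->
  `|expR s / (1 + expR s) - 2^-1| <= e.
Proof.
move=> e0 e4 se.
have E0 := expR_gt0 s.
have h1 := expR_ge1Dx s.
have h2 : expR s * (1 - s) <= 1.
  have := expR_ge1Dx (- s); rewrite expRN => h.
  rewrite -[X in _ <= X](mulfV (negbT (gt_eqF E0))) ler_pM2l //.
have [sl su] : - e <= s /\ s <= e by move: se; rewrite ler_norml => /andP.
set y := expR s / (1 + expR s).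
have hy : y * (1 + expR s) = expR s by rewrite /y mulfVK // gt_eqF // ltr_pwDl.
rewrite ler_norml; apply/andP; split; nra.
Qed.

Lemma normal_lb (D c w K : R) : 0 < D -> 0 <= w -> `|c| + w <= K ->
  (((w *+ 2) * (normal_peak D * expR (- K ^+ 2 / (D ^+ 2 *+ 2))))%:E
    <= normal_prob 0 D `[(c - w)%R, (c + w)%R])%E.
Proof.
move=> D0 w0 cK.
have mI : @measurable _ (measurableTypeR R) `[c - w, c + w].
  have : measurable (`[c - w, c + w] : set R) by exact: measurable_itv.
  by [].
set k := normal_peak D * expR (- K ^+ 2 / (D ^+ 2 *+ 2)).
have k0 : 0 <= k by rewrite mulr_ge0 ?normal_peak_ge0 ?expR_ge0.
rewrite /normal_prob.
apply: (@le_trans _ _ (\int[mu]_(x in `[(c - w)%R, (c + w)%R]) (cst k%:E) x)%E).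
  rewrite integral_cst //.
  have L := @lebesgue_measure_itv R `[(c - w)%R, (c + w)%R].
  rewrite /= in L.
  rewrite -[X in (_ * X)%E]/(@lebesgue_measure R `[(c - w)%R, (c + w)%R]) L lte_fin.
  case: ifPn => hlt.
    by rewrite -EFinD -EFinM lee_fin mulrC ler_wpM2l // lerBDr; lra.
  have -> : w = 0 by move: hlt; rewrite -real_leNgt ?num_real //; lra.
  by rewrite mul0rn mul0r mule0.
apply: ge0_le_integral => //.
- by apply/measurable_EFinP; apply: measurable_funTS; apply: measurable_normal_pdf.
- move=> x; rewrite /= in_itv /= => /andP [h1 h2].
  rewrite lee_fin normal_pdfE ?gt_eqF //= /k ler_wpM2l ?normal_peak_ge0 //.
  rewrite /normal_fun ler_expR subr0 !mulNr lerN2 ler_pM2r; last first.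
    by rewrite invr_gt0 pmulrn_lgt0 // exprn_gt0.
  have hc1 : c <= `|c| := ler_norm c.
  have hc2 : - c <= `|c| by rewrite -normrN ler_norm.
  have [hx1 hx2] : - K <= x /\ x <= K by split; lra.
  nra.
Qed.

Lemma ipC (f g : R -> R) : ip01 f g = ip01 g f.
Proof. by apply: eq_Rintegral => x _; rewrite mulrC. Qed.

Lemma ipB (f g k : R -> R) : L2_01 f -> L2_01 g -> L2_01 k ->
  ip01 (fun t => f t - g t) k = ip01 f k - ip01 g k.
Proof.
move=> Lf Lg Lk; rewrite /ip01 -RintegralB; first last.
- exact: L2_mul.
- exact: L2_mul.
- exact: mI.
by apply: eq_Rintegral => x _; rewrite mulrBl.
Qed.

Lemma norm01_sqr (f : R -> R) : norm01 f ^+ 2 = ip01 f f.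
Proof.
rewrite /norm01 sqr_sqrtr //; apply: Rintegral_ge0 => x _; by rewrite -expr2 sqr_ge0.
Qed.

Lemma key_id (f g : R -> R) : L2_01 f -> L2_01 g ->
  ip01 (fun t => f t - g t) f - 2^-1 * norm01 f ^+ 2 + 2^-1 * norm01 g ^+ 2
  = 2^-1 * norm01 (fun t => f t - g t) ^+ 2.
Proof.
move=> Lf Lg; have Lh := L2_sub Lf Lg.
have e1 := ipB Lf Lg Lf.
have e2 := ipB Lf Lg Lg.
have e3 := ipB Lf Lg Lh.
rewrite (ipC f) (ipC g) e1 e2 in e3.
rewrite !norm01_sqr e3 e1 (ipC g f); lra.
Qed.
Lemma tail_ineq (D e : R) : 0 < D -> D < e -> e < 4^-1 ->
  2^-1 <= 1 + - (D + D ^+ 2 / 4) / 2.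
Proof.
move=> D0 De e4.
have : D ^+ 2 <= D by rewrite expr2; apply: ler_piMr; lra.
lra.
Qed.
End H.

Theorem proposition4 (R : realType) (d : measure_display) (T : measurableType d)
  (P : probability T R) (f g : R -> R) (Y : T -> R) (W : (R -> R) -> T -> R) :
  L2_01 f -> L2_01 g ->
  0 < norm01 (fun t => f t - g t) ->
  bernoulli_half P Y ->
  wiener_integral P W ->
  (forall h, L2_01 h -> indep_rv P Y (W h)) ->
  forall eps : R, eps < 4^-1 ->
  let Delta := norm01 (fun t => f t - g t) in
  (((Num.sqrt (pi *+ 2))^-1 *
     Num.min (eps / Delta * expR (- (1 + Delta / 2) ^+ 2 / 2))
             (expR (- 2^-1) / 2))%:E
   <= P [set w | (`|eta_reg f g Y W w - 2^-1| <= eps)%R])%E.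
Proof.
move=> Lf Lg Dpos [mY [Y01 PY1]] [Wg _] Hind eps heps /=.
set Delta := norm01 (fun t => f t - g t).
have Lh := L2_sub Lf Lg.
have [mZ HZ] := Wg _ Lh.
have Hi := Hind _ Lh.
rewrite -/Delta in HZ Dpos.
set E := expR (- (1 + Delta / 2) ^+ 2 / 2).
have E0 : 0 < E by exact: expR_gt0.
have sp0 : 0 < (Num.sqrt ((pi : R) *+ 2))^-1.
  by rewrite invr_gt0 sqrtr_gt0 pmulrn_lgt0 // pi_gt0.
have [eps0|eps0] := leP eps 0.
  apply: le_trans (measure_ge0 _ _); rewrite lee_fin.
  apply: mulr_ge0_le0; first exact: ltW.
  rewrite ge_min; apply/orP; left.
  apply: mulr_le0_ge0; last exact: ltW.
  by apply: mulr_le0_ge0 => //; rewrite invr_ge0 ltW.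
set w := Num.min eps Delta.
have w0 : 0 < w by rewrite lt_min eps0 Dpos.
have weps : w <= eps by rewrite ge_min lexx.
have wD : w <= Delta by rewrite ge_min lexx orbT.
set c := - (Delta ^+ 2 / 2).
set I : set R := [set` `[(c - w)%R, (c + w)%R]].
have mI : measurable I by exact: measurable_itv.
set A := Y @^-1` [set 1] `&` W (fun t => f t - g t) @^-1` I.
have m1 : measurable ([set 1] : set R) by exact: measurable_set1.
have mA : measurable A.
  apply: measurableI.
    by have := mY measurableT _ m1; rewrite setTI.
  by have := mZ measurableT _ mI; rewrite setTI.
set S := fun w => int_dX f g Y W (fun t => f t - g t) w
           - 2^-1 * norm01 f ^+ 2 + 2^-1 * norm01 g ^+ 2.
have mS : measurable_fun setT S.
  rewrite /S /int_dX.
  apply: measurable_funD => //; apply: measurable_funB => //.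
  apply: measurable_funD => //; apply: measurable_funD.
    by apply: measurable_funM.
  by apply: measurable_funM => //; apply: measurable_funB.
have meta : measurable_fun setT (eta_reg f g Y W).
  have -> : eta_reg f g Y W = (fun x => expR x / (1 + expR x)) \o S by [].
  apply: measurableT_comp => //.
  exact: continuous_measurable_fun (@logistic_cont R).
set B := [set w | (`|eta_reg f g Y W w - 2^-1| <= eps)%R].
have mB : measurable B.
  have -> : B = eta_reg f g Y W @^-1` `[(2^-1 - eps)%R, (2^-1 + eps)%R].
    by apply/seteqP; split => x; rewrite /B /= in_itv /= ler_distl.
  have := meta measurableT _ (measurable_itv `[(2^-1 - eps)%R, (2^-1 + eps)%R]).
  by rewrite setTI.
have key := key_id Lf Lg; rewrite -/Delta in key.
have AB : A `<=` B.
  move=> x [/= Yx Zx]; rewrite /B /= /eta_reg /=.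
  apply: logistic_bound; [exact: ltW | exact: heps |].
  rewrite /int_dX Yx mul1r subrr mul0r addr0.
  have -> : ip01 (fun t => f t - g t) f + W (fun t => f t - g t) x
      - 2^-1 * norm01 f ^+ 2 + 2^-1 * norm01 g ^+ 2
      = 2^-1 * Delta ^+ 2 + W (fun t => f t - g t) x by lra.
  move: Zx; rewrite /I /= in_itv /= => /andP [z1 z2].
  rewrite /c in z1 z2; rewrite ler_norml; apply/andP; split; lra.
have HA : P A = ((2^-1)%:E * normal_prob 0 Delta I)%E.
  by rewrite /A Hi // PY1 HZ // (gt_eqF Dpos).
have PAB : (P A <= P B)%E by apply: le_measure => //; rewrite inE.
apply: le_trans PAB; rewrite HA.
have cK : `|c| + w <= Delta ^+ 2 / 2 + Delta.
  rewrite /c normrN ger0_norm; first lra.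
  by rewrite divr_ge0 // sqr_ge0.
have NL := @normal_lb R Delta c w _ Dpos (ltW w0) cK.
apply: le_trans; last exact: (lee_wpmul2l _ NL).
rewrite -EFinM lee_fin.
have eE : expR (- (Delta ^+ 2 / 2 + Delta) ^+ 2 / (Delta ^+ 2 *+ 2)) = E.
  rewrite /E; congr expR; field.
  by rewrite gt_eqF.
have pk : normal_peak Delta = (Delta * Num.sqrt ((pi : R) *+ 2))^-1.
  rewrite /normal_peak -mulrnAr sqrtrM ?sqr_ge0 // sqrtr_sqr ger0_norm //.
  exact: ltW.
rewrite eE pk.
set s := Num.sqrt ((pi : R) *+ 2).
have s0 : 0 < s by rewrite sqrtr_gt0 pmulrn_lgt0 // pi_gt0.
have -> : 2^-1 * (w *+ 2 * ((Delta * s)^-1 * E)) = s^-1 * (w / Delta * E).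
  field; rewrite !gt_eqF //.
apply: ler_wpM2l; first by rewrite invr_ge0 ltW.
have [hle|hlt] := leP eps Delta.
  rewrite /w (min_l hle) ge_min; apply/orP; left; exact: lexx.
rewrite /w (min_r (ltW hlt)) ge_min; apply/orP; right.
rewrite divff ?gt_eqF // mul1r /E.
have -> : - (1 + Delta / 2) ^+ 2 / 2 = - 2^-1 + (- (Delta + Delta ^+ 2 / 4) / 2).
  by field.
rewrite expRD ler_pM2l ?expR_gt0 //.
apply: le_trans (expR_ge1Dx _).
exact: tail_ineq Dpos hlt heps.
Qed.
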